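(* Let $P$ be a transition kernel on finite $\mathcal{S}$ with actions $\mathcal{A}$ admitting a linear feature representation $\phi:\mathcal{S}\times\mathcal{A}\to\mathbb{R}^K$. Let $\mathcal{K}=\{(s_k,a_k)\}\subset\mathcal{S}\times\mathcal{A}$ be a row basis index set of $\phi$, i.e. $\{\phi(s_k,a_k)\}_{k\in\mathcal{K}}$ is a basis of $\mathrm{span}\{\phi(s,a):(s,a)\in\mathcal{S}\times\mathcal{A}\}$. Then there exist coefficients $\{\lambda_k^{s,a}\}$ with $\phi(s,a)=\sum_{k\in\mathcal{K}}\lambda_k^{s,a}\phi(s_k,a_k)$ for all $(s,a)$, and the matrix $\widehat{P}(s'|s,a)=\sum_{k\in\mathcal{K}}\lambda_k^{s,a}\widehat{P}_\mathcal{K}(s'|s_k,a_k)$ satisfies: (1) $\widehat{P}(s'|s,a)$ is an unbiased estimate of $P(s'|s,a)$; (2) $\sum_{k\in\mathcal{K}}\lambda_k^{s,a}=1$ and $\sum_{s'}\widehat{P}(s'|s,a)=1$ for all $(s,a)$; (3) if $\lambda_k^{s,a}\ge0$ for all $k\in\mathcal{K}$ and all $(s,a)$, then $\widehat{P}(s'|s,a)\ge0$ for all $(s,a,s')$.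
   Context: $P$ admits a linear feature representation $\phi$ if $P(s'|s,a)=\sum_{k=1}^K\phi_k(s,a)\psi_k(s')$ for all $s,a,s'$, for some functions $\psi_k:\mathcal{S}\to\mathbb{R}$. For each $(s_k,a_k)\in\mathcal{K}$, $N$ i.i.d. samples are drawn from $P(\cdot|s_k,a_k)$ using a generative model, and $\widehat{P}_\mathcal{K}(s'|s_k,a_k)=\mathrm{count}(s_k,a_k,s')/N$, where $\mathrm{count}(s_k,a_k,s')$ is the number of these samples equal to $s'$. *)

(* Defs.v *)
From HB Require Import structures.
From mathcomp Require Import all_boot all_order all_algebra.
Set Implicit Arguments. Unset Strict Implicit. Unset Printing Implicit Defensive.
Import Order.TTheory GRing.Theory Num.Theory.
Local Open Scope ring_scope.

Section Defs.
Variables (R : realFieldType) (S A : finType).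

(* P s a s' = P(s'|s,a): a transition kernel *)
Definition is_transition_kernel (P : S -> A -> S -> R) : Prop :=
  (forall s a s', 0 <= P s a s') /\ (forall s a, \sum_(s' : S) P s a s' = 1).

Definition linear_feature_rep (d : nat) (P : S -> A -> S -> R)
    (phi : S -> A -> 'rV[R]_d) : Prop :=
  exists psi : 'I_d -> S -> R,
    forall s a s', P s a s' = \sum_(k < d) phi s a 0 k * psi k s'.

Definition feature_span (d : nat) (phi : S -> A -> 'rV[R]_d) : {vspace 'rV[R]_d} :=
  <<[seq phi p.1 p.2 | p : S * A]>>%VS.

Definition row_basis_index (d : nat) (phi : S -> A -> 'rV[R]_d) (K : {set S * A}) : Prop :=
  basis_of (feature_span phi) [seq phi p.1 p.2 | p <- enum K].

Definition Kidx (K : {set S * A}) : finType := {p : S * A | p \in K}.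

(* outcomes of the generative model: N samples for each (s_k,a_k) in K *)
Definition sample_space (K : {set S * A}) (N : nat) : finType :=
  {ffun Kidx K -> {ffun 'I_N -> S}}.

(* probability of an outcome: all samples independent, sample i of pair k
   distributed as P(.|s_k,a_k) *)
Definition sample_prob (P : S -> A -> S -> R) (K : {set S * A}) (N : nat)
    (w : sample_space K N) : R :=
  \prod_(k : Kidx K) \prod_(i < N) P (val k).1 (val k).2 (w k i).

Definition expect (P : S -> A -> S -> R) (K : {set S * A}) (N : nat)
    (X : sample_space K N -> R) : R :=
  \sum_(w : sample_space K N) sample_prob P w * X w.

Definition count_samples (K : {set S * A}) (N : nat) (w : sample_space K N)
    (k : Kidx K) (s' : S) : nat :=
  #|[set i : 'I_N | w k i == s']|.

Definition PK_hat (K : {set S * A}) (N : nat) (w : sample_space K N)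
    (k : Kidx K) (s' : S) : R :=
  (count_samples w k s')%:R / N%:R.

Definition P_hat (K : {set S * A}) (N : nat) (lam : S -> A -> S * A -> R)
    (w : sample_space K N) (s : S) (a : A) (s' : S) : R :=
  \sum_(k : Kidx K) lam s a (val k) * PK_hat w k s'.

End Defs.

(* Main.v *)
Require Import Defs.
From HB Require Import structures.
From mathcomp Require Import all_boot all_order all_algebra.
Import Order.TTheory GRing.Theory Num.Theory.
Local Open Scope ring_scope.

Section Aux.
Variables (R : realFieldType) (S A : finType).

Lemma prod_sum_ffun (K : {set S * A}) (N : nat)
  (G : Kidx K -> 'I_N -> S -> R) :
  \sum_(w : sample_space K N) \prod_k \prod_i G k i (w k i) =
  \prod_k \prod_i \sum_x G k i x.
Proof.
rewrite [RHS](eq_bigr (fun k => \sum_(f : {ffun 'I_N -> S}) \prod_i G k i (f i))).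
  by rewrite bigA_distr_bigA.
by move=> k _; rewrite bigA_distr_bigA.
Qed.

Lemma expect_ind (P : S -> A -> S -> R) (K : {set S * A}) (N : nat)
  (HP : forall s a, \sum_s' P s a s' = 1) k0 i0 s' :
  expect P (fun w : sample_space K N => ((w k0 i0 == s')%:R : R)) =
  P (val k0).1 (val k0).2 s'.
Proof.
rewrite /expect /sample_prob.
set G := fun (k : Kidx K) (i : 'I_N) (x : S) =>
  P (val k).1 (val k).2 x * (if (k == k0) && (i == i0) then (x == s')%:R else 1).
transitivity (\sum_(w : sample_space K N) \prod_k \prod_i G k i (w k i)).
  apply: eq_bigr => w _.
  symmetry; rewrite (bigD1 k0) //= [in RHS](bigD1 k0) //=.
  rewrite (bigD1 i0) //= [in RHS](bigD1 i0) //=.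
  rewrite [X in _ * X = _](eq_bigr (fun k => \prod_i P (val k).1 (val k).2 (w k i))); last first.
    move=> k /negbTE Hk; apply: eq_bigr => i _; by rewrite /G Hk mulr1.
  rewrite [X in _ * X * _ = _ ](eq_bigr (fun i => P (val k0).1 (val k0).2 (w k0 i))); last first.
    move=> i /negbTE Hi; by rewrite /G eqxx Hi mulr1.
  rewrite /G !eqxx /=.
  by rewrite -!mulrA; congr (_ * _); rewrite mulrC -mulrA.
have H1 : forall k, k != k0 -> \prod_(i < N) \sum_x G k i x = 1.
  move=> k /negbTE Hk; apply: big1 => i _.
  rewrite -[RHS](HP (val k).1 (val k).2); apply: eq_bigr => x _.
  by rewrite /G Hk /= mulr1.
have H2 : forall i, i != i0 -> \sum_x G k0 i x = 1.
  move=> i /negbTE Hi.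
  rewrite -[RHS](HP (val k0).1 (val k0).2); apply: eq_bigr => x _.
  by rewrite /G eqxx Hi /= mulr1.
have H3 : \sum_x G k0 i0 x = P (val k0).1 (val k0).2 s'.
  rewrite (bigD1 s') //= big1 ?addr0.
    by rewrite /G !eqxx /= mulr1.
  by move=> x /negbTE Hx; rewrite /G !eqxx /= Hx mulr0.
rewrite (prod_sum_ffun _ _ G) (bigD1 k0) //= (bigD1 i0) //= H3.
by rewrite big1 ?mulr1 // big1 ?mulr1.
Qed.

End Aux.

Theorem proposition1 (R : realFieldType) (S A : finType) (d : nat)
    (P : S -> A -> S -> R) (phi : S -> A -> 'rV[R]_d)
    (K : {set S * A}) (N : nat) :
  is_transition_kernel P ->
  linear_feature_rep P phi ->
  row_basis_index phi K ->
  (0 < N)%N ->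
  exists lam : S -> A -> S * A -> R,
    (forall s a, phi s a = \sum_(p in K) lam s a p *: phi p.1 p.2) /\
    (* (1) unbiasedness *)
    (forall s a s',
        expect P (fun w : sample_space K N => P_hat lam w s a s') = P s a s') /\
    (* (2) *)
    (forall s a, \sum_(p in K) lam s a p = 1) /\
    (forall (w : sample_space K N) s a, \sum_(s' : S) P_hat lam w s a s' = 1) /\
    (* (3) *)
    ((forall s a p, p \in K -> 0 <= lam s a p) ->
       forall (w : sample_space K N) s a s', 0 <= P_hat lam w s a s').
Proof.
move=> [HP0 HP1] [psi Hpsi] Hbasis HN.
set X := [tuple phi (enum_val i : S * A).1 (enum_val i : S * A).2 | i < #|K|].
pose lam s a p := oapp (fun i => coord X i (phi s a)) 0 [pick i : 'I_#|K| | enum_val i == p].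
have lamE s a (i : 'I_#|K|) : lam s a (enum_val i) = coord X i (phi s a).
  rewrite /lam; case: pickP => [j /eqP /enum_val_inj -> //|].
  by move=> /(_ i); rewrite eqxx.
have Hspan s a : phi s a = \sum_(p in K) lam s a p *: phi p.1 p.2.
  rewrite big_enum_val.
  have Hin : phi s a \in <<X>>%VS.
    move: Hbasis => /andP [/eqP HX _].
    have -> : (X : seq _) = [seq phi p.1 p.2 | p <- enum K].
      apply: (@eq_from_nth _ 0).
        by rewrite size_tuple size_map cardE.
      move=> i; rewrite size_tuple => Hi.
      rewrite -[i]/(nat_of_ord (Ordinal Hi)) -tnth_nth tnth_mktuple.
      rewrite (nth_map (enum_val (Ordinal Hi))) -?cardE //.
      by rewrite -enum_val_nth.
    have : phi s a \in feature_span phi.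
      apply: memv_span; apply/mapP; exists (s, a) => //; by rewrite mem_enum.
    by rewrite -HX.
  rewrite {1}(coord_span Hin); apply: eq_bigr => i _.
  by rewrite lamE -(tnth_nth 0) tnth_mktuple.
have Hlin s a s' : P s a s' = \sum_(p in K) lam s a p * P p.1 p.2 s'.
  rewrite Hpsi {1}(Hspan s a).
  under eq_bigr => k _ do rewrite summxE big_distrl /=.
  rewrite exchange_big; apply: eq_bigr => p _.
  rewrite Hpsi big_distrr; apply: eq_bigr => k _.
  by rewrite mxE /= mulrA.
have Hsum1 s a : \sum_(p in K) lam s a p = 1.
  rewrite -(HP1 s a); under [RHS]eq_bigr => s' _ do rewrite Hlin.
  rewrite exchange_big; apply: eq_bigr => p _.
  by rewrite -big_distrr /= HP1 mulr1.
have HNR : (N%:R : R) != 0 by rewrite pnatr_eq0 -lt0n.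
have Hcnt (w : sample_space K N) k s' :
    ((count_samples w k s')%:R : R) = \sum_(i < N) ((w k i == s')%:R : R).
  rewrite /count_samples -sum1_card natr_sum big_mkcond /=.
  by apply: eq_bigr => i _; rewrite inE; case: (w k i == s').
have HPK (w : sample_space K N) k : \sum_s' PK_hat R w k s' = 1.
  rewrite /PK_hat -big_distrl /=.
  under eq_bigr => s' _ do rewrite Hcnt.
  rewrite exchange_big /= (eq_bigr (fun _ => 1)).
    by rewrite sumr_const card_ord mulfV.
  move=> i _; rewrite (bigD1 (w k i)) //= eqxx big1 ?addr0 //.
  by move=> x; rewrite eq_sym => /negbTE ->.
exists lam; split; first exact: Hspan.
split.
  move=> s a s'; rewrite /expect /P_hat.
  under eq_bigr => w _ do rewrite big_distrr /=.
  rewrite exchange_big /= [RHS](Hlin s a s') [RHS]big_sub. apply: eq_bigr => k _.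
  transitivity (lam s a (val k) * expect P (fun w : sample_space K N => PK_hat R w k s')).
    by rewrite /expect big_distrr; apply: eq_bigr => w _; rewrite mulrCA.
  congr (_ * _).
  rewrite /expect /PK_hat.
  under eq_bigr => w _ do rewrite Hcnt mulrA.
  rewrite -big_distrl /=.
  under eq_bigr => w _ do rewrite big_distrr /=.
  rewrite exchange_big /=.
  rewrite (eq_bigr (fun _ => P (val k).1 (val k).2 s')); last first.
    by move=> j _; exact: (@expect_ind _ _ _ P K N HP1 k j s').
  by rewrite sumr_const card_ord -(mulr_natr (P _ _ _)) mulfK.
split; first exact: Hsum1.
split.
  move=> w s a; rewrite /P_hat exchange_big /=.
  under eq_bigr => k _ do rewrite -big_distrr /= HPK mulr1.
  by rewrite -big_sub Hsum1.
move=> Hpos w s a s'; rewrite /P_hat; apply: sumr_ge0 => k _.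
apply: mulr_ge0; first by apply: Hpos; exact: valP.
by rewrite /PK_hat divr_ge0 ?ler0n.
Qed.
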